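(* Let $(\Omega,\sqsubseteq)$ be a poset and $\mathcal{A}:\Omega\to\wp(\Omega)$ satisfy awareness persistence (if $\omega'\sqsubseteq\omega$ then $\mathcal{A}(\omega)\subseteq\mathcal{A}(\omega')$) and awareness refinability (if $\nu\notin\mathcal{A}(\omega)$ then there is $\omega'\sqsubseteq\omega$ such that $\nu\notin\mathcal{A}(\omega'')$ for all $\omega''\sqsubseteq\omega'$). Then for any $E\in\mathcal{RO}(\Omega,\sqsubseteq)$, we have $\mathbf{A}(E)\in\mathcal{RO}(\Omega,\sqsubseteq)$, where $\omega\in\mathbf{A}(E)$ iff for all $\omega'\sqsubseteq\omega$ and all $\nu\in\mathcal{A}(\omega')$, $\max(E\cap\downarrow\nu)\cup\max(\neg E\cap\downarrow\nu)\subseteq\mathcal{A}(\omega')$.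
   Context: $\downarrow E=\{\omega\mid\omega\sqsubseteq\nu\text{ for some }\nu\in E\}$, $\downarrow\nu=\downarrow\{\nu\}$; $\rho(E)=\{\omega\mid\forall\omega'\sqsubseteq\omega\ \exists\omega''\sqsubseteq\omega'\colon\omega''\in\downarrow E\}$; $\mathcal{RO}(\Omega,\sqsubseteq)=\{E\subseteq\Omega\mid\rho(E)=E\}$ (the regular open sets); $\neg E=\{\omega\mid\forall\omega'\sqsubseteq\omega,\ \omega'\notin E\}$; $\max(E)=\{\omega\in E\mid\text{there is no }\nu\in E\text{ with }\omega\sqsubseteq\nu\text{ and }\nu\not\sqsubseteq\omega\}$. *)

(* Defs.v *)
Set Implicit Arguments.

Section Defs.
Variable Omega : Type.
Variable le : Omega -> Omega -> Prop.

Definition is_poset : Prop :=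
  (forall w, le w w) /\
  (forall w v u, le w v -> le v u -> le w u) /\
  (forall w v, le w v -> le v w -> w = v).

Definition subset (E F : Omega -> Prop) : Prop := forall w, E w -> F w.

Definition down (E : Omega -> Prop) : Omega -> Prop :=
  fun w => exists v, E v /\ le w v.
Definition down1 (nu : Omega) : Omega -> Prop := down (fun v => v = nu).

Definition rho (E : Omega -> Prop) : Omega -> Prop :=
  fun w => forall w', le w' w -> exists w'', le w'' w' /\ down E w''.

Definition regular_open (E : Omega -> Prop) : Prop :=
  forall w, rho E w <-> E w.

Definition negE (E : Omega -> Prop) : Omega -> Prop :=
  fun w => forall w', le w' w -> ~ E w'.

Definition maxset (E : Omega -> Prop) : Omega -> Prop :=
  fun w => E w /\ ~ (exists v, E v /\ le w v /\ ~ le v w).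

Definition setI (E F : Omega -> Prop) : Omega -> Prop := fun w => E w /\ F w.
Definition setU (E F : Omega -> Prop) : Omega -> Prop := fun w => E w \/ F w.

Definition awareness_persistence (A : Omega -> Omega -> Prop) : Prop :=
  forall w w', le w' w -> subset (A w) (A w').

Definition awareness_refinability (A : Omega -> Omega -> Prop) : Prop :=
  forall w nu, ~ A w nu ->
    exists w', le w' w /\ forall w'', le w'' w' -> ~ A w'' nu.

Definition Aop (A : Omega -> Omega -> Prop) (E : Omega -> Prop) : Omega -> Prop :=
  fun w => forall w', le w' w -> forall nu, A w' nu ->
    subset (setU (maxset (setI E (down1 nu))) (maxset (setI (negE E) (down1 nu))))
           (A w').
End Defs.

(* Main.v *)
Require Import Defs.
From Stdlib Require Import Classical.

Theorem lemma3p4 (Omega : Type) (le : Omega -> Omega -> Prop)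
  (A : Omega -> Omega -> Prop) :
  is_poset le ->
  awareness_persistence le A ->
  awareness_refinability le A ->
  forall E : Omega -> Prop, regular_open le E -> regular_open le (Aop le A E).
Proof.
  intros [Hrefl [Htr _]] Hpers Href E _.
  assert (Hdown : forall v u, Aop le A E v -> le u v -> Aop le A E u).
  { intros v u Hv Huv w' Hw'. apply Hv. eapply Htr; eauto. }
  intro w; split.
  - intros Hrho w' Hw' nu HA x Hx.
    destruct (classic (A w' x)) as [H|H]; [exact H|exfalso].
    destruct (Href _ _ H) as [w1 [Hw1 Hno]].
    destruct (Hrho w1 (Htr _ _ _ Hw1 Hw')) as [w2 [Hw2 [v [Hv Hw2v]]]].
    assert (HA2 : Aop le A E w2) by (eapply Hdown; eauto).
    apply (Hno w2 Hw2).
    apply (HA2 w2 (Hrefl w2) nu).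
    + apply (Hpers w' w2 (Htr _ _ _ Hw2 Hw1) nu HA).
    + exact Hx.
  - intros Hw w' Hw'. exists w'. split; [apply Hrefl|].
    exists w'. split; [eapply Hdown; eauto | apply Hrefl].
Qed.
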